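(* Let $X$ be a Banach lattice, $(e_n)$ a semi-normalized basic sequence in $X$ with closed span $E$ and biorthogonal functionals $e_n^*\in E^*$, and let $C>0$. The following are equivalent. (i) For all $x\in E$, all $m\in\mathbb{N}$ and all greedy orderings $\pi$ of $x$, $\|G^\vee_{\pi,m}(x)\|\le C\|x\|$. (ii) For all $x\in E$ and all $m\in\mathbb{N}$, $\|\mathcal{G}^\vee_m(x)\|\le C\|x\|$. (iii) For all $x\in E$ and all $m\in\mathbb{N}$ there exists a greedy ordering $\pi$ of $x$ with $\|G^\vee_{\pi,m}(x)\|\le C\|x\|$. (iv) $\|\mathcal{G}^\vee_{|\mathrm{supp}(x)|}(x)\|\le C\|x\|$ whenever $x\in E$ has finite support and $\mathcal{G}_{|\mathrm{supp}(x)|}(x)$ is a lattice strictly greedy sum of $x$. (v) $\|\mathcal{G}^\vee_{|\mathrm{supp}(x)|}(x)\|\le C\|x\|$ for all $x\in E$ of finite support. Furthermore, the least $C$ for which these estimates hold is $\sup_m\|\mathcal{G}^\vee_m\|$, where $\|\mathcal{G}^\vee_m\|=\sup\{\|\mathcal{G}^\vee_m(x)\|: x\in E,\ \|x\|=1\}$.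
   Context: $\mathrm{supp}(x)=\{n: e_n^*(x)\neq0\}$. A greedy ordering of $x\in E$ is an injective map $\pi:\mathbb{N}\to\mathbb{N}$ with $\mathrm{supp}(x)\subseteq\pi(\mathbb{N})$ and $(|e^*_{\pi(n)}(x)|)_n$ non-increasing. $G_{\pi,m}(x)=\sum_{n=1}^m e^*_{\pi(n)}(x)e_{\pi(n)}$ and $G^\vee_{\pi,m}(x)=\bigvee_{n=1}^m|G_{\pi,n}(x)|$. The natural greedy ordering $\rho$ of $x$ is the greedy ordering in which ties $|e^*_{\rho(j)}(x)|=|e^*_{\rho(k)}(x)|$ with $j<k$ satisfy $\rho(j)<\rho(k)$; $\mathcal{G}_m(x)=G_{\rho,m}(x)$ and $\mathcal{G}^\vee_m(x)=\bigvee_{n=1}^m|\mathcal{G}_n(x)|$. $G_{\pi,m}(x)$ is a lattice strictly greedy sum of $x$ of order $m$ if $|e^*_{\pi(i)}(x)|\ne|e^*_{\pi(j)}(x)|$ for all distinct $i,j\in\{1,\dots,m\}$ with $e^*_{\pi(i)}(x)\ne0$. *)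

(* Defs.v *)
From HB Require Import structures.
From mathcomp Require Import all_boot all_order all_algebra.
From mathcomp Require Import all_classical all_reals all_analysis.
From Stdlib Require Import ClassicalEpsilon.
Set Implicit Arguments. Unset Strict Implicit. Unset Printing Implicit Defensive.
Import Order.TTheory GRing.Theory Num.Theory.
Import numFieldNormedType.Exports.
Local Open Scope classical_set_scope.
Local Open Scope ring_scope.

Section Defs.
Variables (R : realType) (X : normedModType R).

Definition labs (join : X -> X -> X) (x : X) : X := join x (- x).

(* Completeness of X is
   imposed separately by taking X : completeNormedModType R. *)
Definition normed_lattice (le : X -> X -> Prop) (join : X -> X -> X) : Prop :=
  [/\ [/\ (forall x, le x x),
      (forall x y, le x y -> le y x -> x = y) &
      (forall x y z, le x y -> le y z -> le x z)],
      (forall x y z, le x y -> le (x + z) (y + z)),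
      (forall (a : R) x y, 0 <= a -> le x y -> le (a *: x) (a *: y)),
      (forall x y, [/\ le x (join x y), le y (join x y) &
                      forall z, le x z -> le y z -> le (join x y) z]) &
      (forall x y, le (labs join x) (labs join y) -> `|x| <= `|y|)].

Definition closed_span (e : nat -> X) : set X :=
  closure [set x | exists (n : nat) (a : nat -> R), x = \sum_(i < n) a i *: e i].

Definition semi_normalized (e : nat -> X) : Prop :=
  exists a b : R, 0 < a /\ forall n, a <= `|e n| <= b.

Definition basic_seq (e : nat -> X) : Prop :=
  forall x, closed_span e x ->
    exists a : nat -> R,
      ((fun m => \sum_(k < m) a k *: e k) @ \oo --> x) /\
      forall b : nat -> R, ((fun m => \sum_(k < m) b k *: e k) @ \oo --> x) -> a = b.

Definition coefficient_functionals (e : nat -> X) (estar : nat -> X -> R) : Prop :=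
  forall x, closed_span e x ->
    (fun m => \sum_(k < m) estar k x *: e k) @ \oo --> x.

Variables (e : nat -> X) (estar : nat -> X -> R).

Definition greedy_ordering (x : X) (pi : nat -> nat) : Prop :=
  [/\ injective pi,
      (forall n, estar n x != 0 -> exists k, pi k = n) &
      (forall j k, (j <= k)%N -> `|estar (pi k) x| <= `|estar (pi j) x|)].

Definition natural_greedy_ordering (x : X) (rho : nat -> nat) : Prop :=
  greedy_ordering x rho /\
  forall j k, (j < k)%N -> `|estar (rho j) x| = `|estar (rho k) x| ->
    (rho j < rho k)%N.

(* G_{pi,m}(x) ; indices of the ordering start at 0 *)
Definition Gsum (pi : nat -> nat) (m : nat) (x : X) : X :=
  \sum_(n < m) estar (pi n) x *: e (pi n).

(* G^vee_{pi,m}(x) = \/_{n=1}^m |G_{pi,n}(x)|  (join taken starting from 0,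
   harmless since every |.| >= 0) *)
Definition Gvee (join : X -> X -> X) (pi : nat -> nat) (m : nat) (x : X) : X :=
  foldr (fun n acc => join (labs join (Gsum pi n.+1 x)) acc) 0 (iota 0 m).

(* the natural greedy ordering of x (chosen; all choices give the same sums) *)
Definition nat_greedy (x : X) : nat -> nat :=
  epsilon (inhabits id) (natural_greedy_ordering x).

Definition NG (m : nat) (x : X) : X := Gsum (nat_greedy x) m x.
Definition NGvee (join : X -> X -> X) (m : nat) (x : X) : X :=
  Gvee join (nat_greedy x) m x.

Definition lattice_strictly_greedy (pi : nat -> nat) (m : nat) (x : X) : Prop :=
  forall i j, (i < m)%N -> (j < m)%N -> i <> j -> estar (pi i) x != 0 ->
    `|estar (pi i) x| != `|estar (pi j) x|.

End Defs.

(* Main.v *)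
Require Import Defs.
From HB Require Import structures.
From mathcomp Require Import all_boot all_order all_algebra.
From mathcomp Require Import all_classical all_reals all_analysis.
From Stdlib Require Import ClassicalEpsilon.
From mathcomp Require Import lra zify ring.
Import Order.TTheory GRing.Theory Num.Theory.
Import numFieldNormedType.Exports.
Local Open Scope classical_set_scope.
Local Open Scope ring_scope.
Set Implicit Arguments. Unset Strict Implicit. Unset Printing Implicit Defensive.

Section Lat.
Variables (R : realType) (X : normedModType R) (le : X -> X -> Prop)
  (join : X -> X -> X).
Hypothesis HL : normed_lattice le join.

Lemma lrefl x : le x x. Proof. by case: HL => [[h1 h2 h3] _ _ _ _]. Qed.
Lemma lanti x y : le x y -> le y x -> x = y. Proof. by case: HL => [[h1 h2 h3] _ _ _ _]; apply: h2. Qed.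
Lemma ltrans x y z : le x y -> le y z -> le x z.
Proof. by case: HL => [[h1 h2 h3] _ _ _ _]; apply: h3. Qed.
Lemma ladd x y z : le x y -> le (x + z) (y + z).
Proof. by case: HL => _ h _ _ _; apply: h. Qed.
Lemma lscale (a : R) x y : 0 <= a -> le x y -> le (a *: x) (a *: y).
Proof. by case: HL => _ _ h _ _; apply: h. Qed.
Lemma jl x y : le x (join x y). Proof. by case: HL => _ _ _ h _; case: (h x y). Qed.
Lemma jr x y : le y (join x y). Proof. by case: HL => _ _ _ h _; case: (h x y). Qed.
Lemma jlub x y z : le x z -> le y z -> le (join x y) z.
Proof. by case: HL => _ _ _ h _; case: (h x y) => _ _; apply. Qed.
Lemma lnorm x y : le (labs join x) (labs join y) -> `|x| <= `|y|.
Proof. by case: HL => _ _ _ _ h; apply: h. Qed.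

Lemma ladd2 a b c d : le a b -> le c d -> le (a + c) (b + d).
Proof.
move=> h1 h2; apply: ltrans (ladd c h1) _.
by rewrite (addrC b c) (addrC b d); apply: ladd.
Qed.

Lemma lsubl a b w : le a (w + b) -> le (a - b) w.
Proof. by move=> /(ladd (- b)); rewrite addrK. Qed.

Lemma joinC a b : join a b = join b a.
Proof. by apply: lanti; apply: jlub; [exact: jr | exact: jl | exact: jr | exact: jl]. Qed.


Lemma labs_ge0 z : le 0 (labs join z).
Proof.
have h : le 0 (labs join z + labs join z).
  by rewrite -(subrr z); apply: ladd2; [apply: jl | apply: jr].
have h2 : (0 : R) <= 2^-1 by rewrite invr_ge0.
move: (lscale h2 h); rewrite scaler0 -mulr2n.
have -> : labs join z *+ 2 = (2 : R) *: labs join z by rewrite scaler_nat.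
by rewrite scalerA mulVf // scale1r.
Qed.

Lemma labsN z : labs join (- z) = labs join z.
Proof. by rewrite /labs opprK joinC. Qed.

Lemma key D z : le D (labs join z) -> le (- D) (labs join z) -> `|D| <= `|z|.
Proof. by move=> h1 h2; apply: lnorm; apply: jlub. Qed.

Lemma join_le a b c : le (join a b - join c b) (labs join (a - c)).
Proof.
apply: lsubl; apply: jlub.
  rewrite -{1}(subrK c a); apply: ladd2; first exact: jl.
  exact: jl.
rewrite -{1}(add0r b); apply: ladd2; first exact: labs_ge0.
exact: jr.
Qed.

Lemma join_contl a b c : `|join a b - join c b| <= `|a - c|.
Proof.
apply: key; first exact: join_le.
by rewrite opprB -labsN opprB; apply: join_le.
Qed.

Lemma join_contr a b c : `|join b a - join b c| <= `|a - c|.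
Proof. by rewrite (joinC b a) (joinC b c); apply: join_contl. Qed.

Lemma labs_le u v : le (labs join u - labs join v) (labs join (u - v)).
Proof.
apply: lsubl; apply: jlub.
  rewrite -{1}(subrK v u); apply: ladd2; first exact: jl.
  exact: jl.
have -> : - u = - (u - v) + - v by rewrite opprB addrC addrA addNr add0r.
by apply: ladd2; apply: jr.
Qed.

Lemma labs_cont u v : `|labs join u - labs join v| <= `|u - v|.
Proof.
apply: key; first exact: labs_le.
by rewrite opprB -(labsN (u - v)) opprB; apply: labs_le.
Qed.

Definition F (u : nat -> X) (l : seq nat) : X :=
  foldr (fun n acc => join (labs join (u n)) acc) 0 l.

Lemma F_ext u v l : (forall n, n \in l -> u n = v n) -> F u l = F v l.
Proof.
elim: l => //= n l IH H; rewrite H ?mem_head // IH // => k hk.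
by apply: H; rewrite in_cons hk orbT.
Qed.

Lemma F_diff u v l K : (forall n, n \in l -> `|u n - v n| <= K) ->
  `|F u l - F v l| <= (size l)%:R * K.
Proof.
elim: l => [|n l IH] H; first by rewrite /= subrr normr0 mul0r.
rewrite /F /= -/(F u l) -/(F v l).
have := ler_distD (join (labs join (v n)) (F u l)) (join (labs join (u n)) (F u l)) (join (labs join (v n)) (F v l)).
move=> /le_trans; apply.
rewrite -addn1 natrD mulrDl mul1r addrC lerD //.
  have h1 := join_contr (F u l) (labs join (v n)) (F v l).
  apply: le_trans h1 _. apply: IH => k hk.
  by apply: H; rewrite in_cons hk orbT.
have h1 := join_contl (labs join (u n)) (F u l) (labs join (v n)).
apply: le_trans h1 _; have h2 := labs_cont (u n) (v n).
by apply: le_trans h2 _; apply: H; rewrite mem_head.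
Qed.

Lemma F_ge0 (u : nat -> X) l : le 0 (F u l).
Proof.
elim: l => [|n l IH] /=; first exact: lrefl.
exact: ltrans IH (jr _ _).
Qed.

Lemma F_init (u : nat -> X) l a b : le a b ->
  le (foldr (fun n acc => join (labs join (u n)) acc) a l)
     (foldr (fun n acc => join (labs join (u n)) acc) b l).
Proof.
elim: l => //= n l IH h; apply: jlub; first exact: jl.
exact: ltrans (IH h) (jr _ _).
Qed.

Lemma lopp a b : le a b -> le (- b) (- a).
Proof.
move=> /(ladd (- a - b)).
by rewrite addrA subrr add0r addrCA subrr addr0.
Qed.

Lemma labs_id z : le 0 z -> labs join z = z.
Proof.
move=> hz; apply: lanti; last exact: jl.
apply: jlub; first exact: lrefl.
have h1 := lopp hz; rewrite oppr0 in h1; exact: ltrans h1 hz.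
Qed.

Lemma norm_mono z w : le 0 z -> le z w -> `|z| <= `|w|.
Proof.
move=> hz hzw; apply: lnorm; rewrite labs_id // labs_id //.
exact: ltrans hzw.
Qed.

Lemma F_mono (u : nat -> X) m M : (m <= M)%N ->
  `|F u (iota 0 m)| <= `|F u (iota 0 M)|.
Proof.
move=> hm; rewrite -(subnKC hm) iotaD /F foldr_cat.
apply: norm_mono; first exact: F_ge0.
apply: F_init; exact: F_ge0.
Qed.

Lemma join_scale (r : R) a b : 0 < r -> join (r *: a) (r *: b) = r *: join a b.
Proof.
move=> hr; apply: lanti.
  by apply: jlub; apply: lscale; rewrite ?ltW //; [exact: jl | exact: jr].
have hr' : 0 <= r^-1 by rewrite invr_ge0 ltW.
have h : le (join a b) (r^-1 *: join (r *: a) (r *: b)).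
  apply: jlub.
    by rewrite -{1}(scale1r a) -(mulVf (lt0r_neq0 hr)) -scalerA; apply: lscale => //; exact: jl.
  by rewrite -{1}(scale1r b) -(mulVf (lt0r_neq0 hr)) -scalerA; apply: lscale => //; exact: jr.
move: (lscale (ltW hr) h); rewrite scalerA mulfV ?scale1r //.
exact: lt0r_neq0.
Qed.

Lemma labs_scale (r : R) a : 0 < r -> labs join (r *: a) = r *: labs join a.
Proof. by move=> hr; rewrite /labs -scalerN join_scale. Qed.

Lemma F_scale (r : R) (u : nat -> X) l : 0 < r ->
  F (fun n => r *: u n) l = r *: F u l.
Proof.
move=> hr; elim: l => [|n l IH] /=; first by rewrite scaler0.
by rewrite /F /= -/(F _ l) -/(F u l) IH labs_scale // join_scale.
Qed.

Lemma join00 : join 0 0 = 0.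
Proof. by apply: lanti; [apply: jlub; exact: lrefl | exact: jl]. Qed.

Lemma F_zero l : F (fun _ => 0) l = 0.
Proof.
elim: l => [|n l IH] //=.
by rewrite /F /= -/(F _ l) IH /labs oppr0 !join00.
Qed.
End Lat.

Section Coef.
Variables (R : realType) (X : normedModType R) (e : nat -> X) (estar : nat -> X -> R).
Hypotheses (Hb : basic_seq e) (Hcf : coefficient_functionals e estar).

Lemma span_E (a : nat -> R) N : closed_span e (\sum_(k < N) a k *: e k).
Proof. by apply: subset_closure; exists N, a. Qed.

Lemma coef_unique x (a : nat -> R) : closed_span e x ->
  (fun m => \sum_(k < m) a k *: e k) @ \oo --> x -> forall k, a k = estar k x.
Proof.
move=> Ex ha k; have [a0 [_ hu]] := Hb Ex.
have e1 := hu _ ha; have e2 := hu (fun k => estar k x) (Hcf Ex).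
by rewrite -e1 e2.
Qed.

Lemma coef_fin (a : nat -> R) N k :
  estar k (\sum_(i < N) a i *: e i) = if (k < N)%N then a k else 0.
Proof.
set b := fun i => if (i < N)%N then a i else 0.
have <- : b k = (if (k < N)%N then a k else 0) by [].
symmetry; apply: (coef_unique (a:=b)); first exact: span_E.
apply: cvg_near_cst; exists N => // n /= hn.
rewrite (big_ord_widen n (fun i => a i *: e i) hn).
rewrite (bigID (fun i : 'I_n => (i < N)%N)) /= [X in _ + X]big1 ?addr0.
  by apply: eq_bigr => i hi; rewrite /b hi.
by move=> i /negbTE hi; rewrite /b hi scale0r.
Qed.

Lemma sumZ (r : R) (c : nat -> R) m :
  r *: \sum_(k < m) c k *: e k = \sum_(k < m) (r * c k) *: e k.
Proof. by rewrite scaler_sumr; apply: eq_bigr => i _; rewrite scalerA. Qed.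

Lemma E_scale x (r : R) : closed_span e x -> closed_span e (r *: x).
Proof.
move=> Ex.
have hc : (fun m => r *: \sum_(k < m) estar k x *: e k) @ \oo --> r *: x.
  exact: cvgZl_tmp (Hcf Ex).
have hcl : closed (closed_span e) by apply: closed_closure.
apply: (closed_cvg (closed_span e) hcl _ _ hc).
exists 0%N => // n _.
by have := span_E (a:=fun k => r * estar k x) (N:=n); rewrite -(sumZ r (fun k => estar k x)).
Qed.

Lemma coef_scale x (r : R) k : closed_span e x ->
  estar k (r *: x) = r * estar k x.
Proof.
move=> Ex; symmetry.
apply: (coef_unique (a := fun k => r * estar k x)); first exact: E_scale.
have hc : (fun m => r *: \sum_(k < m) estar k x *: e k) @ \oo --> r *: x.
  exact: cvgZl_tmp (Hcf Ex).
by under eq_fun do rewrite -(sumZ r (fun k => estar k x)).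
Qed.

Lemma coef_small x : closed_span e x -> semi_normalized e ->
  forall r : R, 0 < r -> exists N, forall k, (N <= k)%N -> `|estar k x| < r.
Proof.
move=> Ex [a [b [ha hab]]] r hr.
have /cvgrPdist_lt /(_ (r * a / 2)) := Hcf Ex.
have hra : 0 < r * a / 2 by rewrite divr_gt0 // mulr_gt0.
move=> /(_ hra) [N _ HN]; exists N => k hk.
have h1 := HN k hk; have h2 := HN k.+1 (leqW hk).
move: h1 h2 => /= h1 h2.
rewrite big_ord_recr /= in h2.
set S := \sum_(i < k) estar i x *: e i in h1 h2.
have h3 : `|estar k x *: e k| < r * a.
  have -> : estar k x *: e k = (x - S) - (x - (S + estar k x *: e k)).
    by rewrite opprB addrA addrA subrK (addrC x) addrK.
  apply: le_lt_trans (ler_normB _ _) _.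
  by have := ltrD h1 h2; rewrite -splitr.
rewrite normrZ in h3.
have /andP [h4 _] := hab k.
have h5 : `|estar k x| * a < r * a.
  by apply: le_lt_trans h3; apply: ler_wpM2l.
by rewrite ltr_pM2r in h5.
Qed.
End Coef.

Section Greedy.
Variables (R : realType) (c : nat -> R).

Definition prec i j := `|c j| < `|c i| \/ (`|c i| = `|c j| /\ (i < j)%N).

Lemma list_max (l : seq nat) a : a \in l ->
  exists2 k, k \in l & forall j, j \in l -> `|c j| <= `|c k|.
Proof.
elim: l a => // x l IH a _.
case: l IH => [|y l] IH.
  by exists x => [|j]; rewrite ?mem_head // inE => /eqP ->.
have [k hk hmax] := IH y (mem_head _ _).
case: (leP `|c x| `|c k|) => hxk.
  exists k; first by rewrite in_cons hk orbT.
  by move=> j; rewrite in_cons => /orP [/eqP -> //|]; exact: hmax.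
exists x; first exact: mem_head.
move=> j; rewrite in_cons => /orP [/eqP -> //|hj].
exact: le_trans (hmax j hj) (ltW hxk).
Qed.

Hypothesis Hc : forall r : R, 0 < r -> exists N, forall k, (N <= k)%N -> `|c k| < r.

Lemma max_exists (A : nat -> Prop) a : A a ->
  exists k, A k /\ forall j, A j -> `|c j| <= `|c k|.
Proof.
move=> Aa.
case: (pselect (exists a', A a' /\ c a' != 0)) => [[a' [Aa' ha']]|hn]; last first.
  exists a; split => // j Aj.
  case: (eqVneq (c j) 0) => [->|hj]; first by rewrite normr0.
  by exfalso; apply: hn; exists j.
have hr : 0 < `|c a'| by rewrite normr_gt0.
have [N HN] := Hc hr.
set l := [seq k <- iota 0 N | `[< A k >]].
have ha'l : a' \in l.
  rewrite mem_filter mem_iota leq0n add0n /=; apply/andP; split; first exact/asboolP.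
  rewrite ltnNge; apply/negP => /HN; by rewrite ltxx.
have [k hk hmax] := list_max ha'l.
move: hk; rewrite mem_filter => /andP [/asboolP Ak _].
exists k; split => // j Aj.
case: (ltnP j N) => hj.
  apply: hmax; rewrite mem_filter mem_iota /= hj; apply/andP; split => //; exact/asboolP.
apply: le_trans (ltW (HN j hj)) _.
exact: hmax.
Qed.

Lemma min_exists (A : nat -> Prop) a : A a ->
  exists i, A i /\ forall j, A j -> j <> i -> prec i j.
Proof.
move=> Aa; have [k0 [Ak0 hk0]] := max_exists Aa.
have exP : exists n, `[< A n /\ forall j, A j -> `|c j| <= `|c n| >].
  by exists k0; apply/asboolP.
case: (ex_minnP exP) => i /asboolP [Ai hi] hmin.
exists i; split => // j Aj hji.
have := hi j Aj; rewrite le_eqVlt => /orP [/eqP hij|]; last by left.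
right; split; first by [].
have : (i <= j)%N.
  by apply: hmin; apply/asboolP; split => // j' Aj'; rewrite hij; exact: hi.
rewrite leq_eqVlt => /orP [/eqP hij'|] //.
by exfalso; apply: hji.
Qed.

Lemma fresh (l : seq nat) : exists a, a \notin l.
Proof.
exists (foldr maxn 0 l).+1.
have : forall x, x \in l -> (x <= foldr maxn 0 l)%N.
  elim: l => //= y l IH x; rewrite in_cons => /orP [/eqP ->|/IH h].
    exact: leq_maxl.
  exact: leq_trans h (leq_maxr _ _).
by move=> h; apply/negP => /h; rewrite ltnn.
Qed.

Definition pick (l : seq nat) : nat :=
  epsilon (inhabits 0%N)
    (fun i => i \notin l /\ forall j, j \notin l -> j <> i -> prec i j).

Lemma pick_spec l :
  pick l \notin l /\ forall j, j \notin l -> j <> pick l -> prec (pick l) j.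
Proof.
rewrite /pick; apply: (@epsilon_spec nat (inhabits 0%N)
  (fun i => i \notin l /\ forall j, j \notin l -> j <> i -> prec i j)).
have [a ha] := fresh l.
have [i [Ai hi]] := min_exists (A := fun k => is_true (k \notin l)) ha.
by exists i.
Qed.

Fixpoint Lr n := if n is n'.+1 then rcons (Lr n') (pick (Lr n')) else [::].
Definition rho n := pick (Lr n).

Lemma Lr_eq n : Lr n = map rho (iota 0 n).
Proof.
elim: n => [//|n IH].
change (Lr n.+1) with (rcons (Lr n) (rho n)).
by rewrite -addn1 iotaD add0n map_cat cats1 -IH.
Qed.

Lemma rho_new j n : (j < n)%N -> rho j != rho n.
Proof.
move=> hj; have [h _] := pick_spec (Lr n).
apply/eqP => e; move: h; rewrite -/(rho n) -e Lr_eq.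
by rewrite map_f // mem_iota leq0n add0n.
Qed.

Lemma rho_inj : injective rho.
Proof.
move=> j k e; case: (ltngtP j k) => // h.
  by have := rho_new h; rewrite e eqxx.
by have := rho_new h; rewrite e eqxx.
Qed.

Lemma rho_prec j k : (j < k)%N -> prec (rho j) (rho k).
Proof.
move=> hjk; have [_ h] := pick_spec (Lr j); apply: h.
  rewrite Lr_eq; apply/mapP => -[i hi e].
  move: hi; rewrite mem_iota leq0n add0n /= => hi.
  by have := rho_new (ltn_trans hi hjk); rewrite e eqxx.
by move=> e; have := rho_new hjk; rewrite e eqxx.
Qed.

Lemma rho_greedy j k : (j <= k)%N -> `|c (rho k)| <= `|c (rho j)|.
Proof.
rewrite leq_eqVlt => /orP [/eqP -> //|/rho_prec [h|[h _]]].
  exact: ltW.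
by rewrite h.
Qed.

Lemma rho_nat j k : (j < k)%N -> `|c (rho j)| = `|c (rho k)| -> (rho j < rho k)%N.
Proof.
move=> /rho_prec [h|[_ h]] // e.
by move: h; rewrite e ltxx.
Qed.

Lemma rho_cover n : c n != 0 -> exists k, rho k = n.
Proof.
move=> hn0; case: (pselect (exists k, rho k = n)) => // hn.
have hr : 0 < `|c n| by rewrite normr_gt0.
have [N HN] := Hc hr.
have hall : forall k, (rho k < N)%N.
  move=> k; rewrite ltnNge; apply/negP => /HN hk.
  have hp : prec (rho k) n.
    have [_ h] := pick_spec (Lr k); apply: h.
      rewrite Lr_eq; apply/mapP => -[i _ e]; apply: hn; exists i; by rewrite e.
    by move=> e; apply: hn; exists k; rewrite e.
  case: hp => [h|[h _]].
    by move: (lt_trans h hk); rewrite ltxx.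
  by move: hk; rewrite h ltxx.
have := uniq_leq_size (s1 := map rho (iota 0 N.+1)) (s2 := iota 0 N).
rewrite map_inj_uniq ?iota_uniq; last exact: rho_inj.
move=> /(_ isT) h.
have : (size (map rho (iota 0 N.+1)) <= size (iota 0 N))%N.
  by apply: h => y /mapP [i _ ->]; rewrite mem_iota leq0n add0n hall.
by rewrite size_map !size_iota ltnn.
Qed.
End Greedy.

Lemma nat_greedy_exists (R : realType) (X : normedModType R)
  (estar : nat -> X -> R) x :
  (forall r : R, 0 < r -> exists N, forall k, (N <= k)%N -> `|estar k x| < r) ->
  exists rho, natural_greedy_ordering estar x rho.
Proof.
move=> Hc; exists (rho (fun n => estar n x)); split; first split.
- exact: (rho_inj (c:=fun n => estar n x)).
- by move=> n hn; exact: (rho_cover Hc hn).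
- by move=> j k; exact: (rho_greedy (c:=fun n => estar n x)).
- by move=> j k; exact: (rho_nat (c:=fun n => estar n x)).
Qed.

Lemma approx (R : realType) (G xn C : R) : 0 < C ->
  (forall eps, 0 < eps -> exists yn Gy : R,
      [/\ G <= Gy + eps, Gy <= C * yn & yn <= xn + eps + eps]) ->
  G <= C * xn.
Proof.
move=> hC h; apply/ler_addgt0Pr => eps he.
set eps' := eps / (1 + 2 * C).
have h12 : 0 < 1 + 2 * C by lra.
have he' : 0 < eps' by rewrite divr_gt0.
have heq : eps' * (1 + 2 * C) = eps by rewrite /eps' mulfVK // lt0r_neq0.
have [yn [Gy [h1 h2 h3]]] := h eps' he'.
have h4 : C * yn <= C * (xn + eps' + eps') by rewrite ler_pM2l.
rewrite !mulrDr in h4.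
rewrite mulrDr in heq.
lra.
Qed.

Section Main.
Variables (R : realType) (X : normedModType R) (le : X -> X -> Prop)
  (join : X -> X -> X) (e : nat -> X) (estar : nat -> X -> R).
Hypotheses (HL : normed_lattice le join) (Hsn : semi_normalized e)
  (Hb : basic_seq e) (Hcf : coefficient_functionals e estar).

Lemma nat_greedy_spec x : closed_span e x ->
  natural_greedy_ordering estar x (nat_greedy estar x).
Proof.
move=> Ex; rewrite /nat_greedy.
apply: (@epsilon_spec _ (inhabits id) (natural_greedy_ordering estar x)).
exact: (nat_greedy_exists (coef_small Hcf Ex Hsn)).
Qed.

Lemma Gvee_F pi m x : Gvee e estar join pi m x =
  F join (fun n => Gsum e estar pi n.+1 x) (iota 0 m).
Proof. by []. Qed.

Lemma Gvee_ext pi pi' m x : (forall j, (j < m)%N -> pi j = pi' j) ->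
  Gvee e estar join pi m x = Gvee e estar join pi' m x.
Proof.
move=> h; rewrite !Gvee_F; apply: F_ext => n; rewrite mem_iota /= => hn.
apply: eq_bigr => i _; rewrite h //.
exact: leq_trans (ltn_ord i) hn.
Qed.

Lemma agree z rho pi m : greedy_ordering estar z rho -> injective pi ->
  (forall j, (j < m)%N -> estar (pi j) z != 0) ->
  (forall i j, (i < j)%N -> (j < m)%N -> `|estar (pi j) z| < `|estar (pi i) z|) ->
  (forall t, t \notin map pi (iota 0 m) -> forall j, (j < m)%N ->
      `|estar t z| < `|estar (pi j) z|) ->
  forall j, (j < m)%N -> rho j = pi j.
Proof.
move=> [rinj rcov rdec] pinj hnz hdec hout.
elim/ltn_ind => j IH hj.
have [k hk] := rcov _ (hnz j hj).
have hkj : (j <= k)%N.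
  rewrite leqNgt; apply/negP => hkj.
  have := IH k hkj (ltn_trans hkj hj); rewrite hk => /pinj hjk.
  by move: hkj; rewrite hjk ltnn.
have h1 : `|estar (pi j) z| <= `|estar (rho j) z| by rewrite -hk; exact: rdec.
case: (boolP (rho j \in map pi (iota 0 m))) => [/mapP [i hi ei]|hn].
  move: hi; rewrite mem_iota /= => hi.
  case: (ltngtP i j) => hij.
  - have := IH i hij (ltn_trans hij hj); rewrite -ei => /rinj e'.
    by move: hij; rewrite e' ltnn.
  - have := hdec j i hij hi; rewrite -ei => h2.
    by move: (le_lt_trans h1 h2); rewrite ltxx.
  - by rewrite ei hij.
have h2 := hout _ hn j hj.
by move: (le_lt_trans h1 h2); rewrite ltxx.
Qed.

Lemma supp_first x rho s : greedy_ordering estar x rho -> uniq s ->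
  (forall n, estar n x != 0 <-> n \in s) ->
  forall j, (j < size s)%N -> estar (rho j) x != 0.
Proof.
move=> [rinj rcov rdec] us hs j hj; apply/negP => /eqP h0.
have hsub : {subset s <= map rho (iota 0 j)}.
  move=> n /hs hn; have [k hk] := rcov _ hn.
  apply/mapP; exists k => //; rewrite mem_iota /= ltnNge; apply/negP => hjk.
  have := rdec _ _ hjk; rewrite h0 normr0 hk normr_le0 => h.
  by move: hn; rewrite h.
have := uniq_leq_size us hsub; rewrite size_map size_iota => h.
by move: (leq_ltn_trans h hj); rewrite ltnn.
Qed.

Lemma first_eq_s x rho s : greedy_ordering estar x rho -> uniq s ->
  (forall n, estar n x != 0 <-> n \in s) ->
  map rho (iota 0 (size s)) =i s.
Proof.
move=> hg us hs.
have hu : uniq (map rho (iota 0 (size s))).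
  by rewrite map_inj_uniq ?iota_uniq //; case: hg.
have hsub : {subset map rho (iota 0 (size s)) <= s}.
  move=> n /mapP [j hj ->]; apply/hs; apply: (supp_first hg us hs).
  by move: hj; rewrite mem_iota.
have hsz : (size s <= size (map rho (iota 0 (size s))))%N.
  by rewrite size_map size_iota.
by case: (uniq_min_size hu hsub hsz).
Qed.

Lemma perturb x pi m (eps : R) : closed_span e x -> injective pi ->
  (forall j k, (j <= k)%N -> (k < m)%N -> `|estar (pi k) x| <= `|estar (pi j) x|) ->
  (forall t, t \notin map pi (iota 0 m) -> forall j, (j < m)%N ->
     `|estar t x| <= `|estar (pi j) x|) ->
  0 < eps ->
  exists y (sy : seq nat), [/\ closed_span e y, `|y| <= `|x| + eps + eps,
     `|Gvee e estar join pi m x - NGvee e estar join m y| <= eps,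
     [/\ uniq sy, (forall n, estar n y != 0 <-> n \in sy),
     {subset map pi (iota 0 m) <= sy} &
       (forall k, k \in sy -> k \in map pi (iota 0 m) \/ estar k x != 0)] &
     (forall j, (j < m)%N -> nat_greedy estar y j = pi j) /\
     (forall i j, (i < m)%N -> (j < m)%N -> i <> j ->
        `|estar (pi i) y| != `|estar (pi j) y|)].
Proof.
move=> Ex pinj hdec hout he.
have [a0 [b0 [ha0 hab]]] := Hsn.
have hb0 : 0 <= b0.
  by have /andP [h1 h2] := hab 0%N; apply: le_trans h2; exact: le_trans (ltW ha0) h1.
have /cvgrPdist_lt /(_ eps he) [N0 _ HN0] := Hcf Ex.
set A := map pi (iota 0 m).
have uA : uniq A by rewrite map_inj_uniq ?iota_uniq.
set N := (N0 + \sum_(j < m) (pi j).+1)%N.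
have hN0 : (N0 <= N)%N by rewrite leq_addr.
have hpiN : forall j, (j < m)%N -> (pi j < N)%N.
  by move=> j hj; rewrite /N (bigD1 (Ordinal hj)) //=; lia.
set K : R := N%:R * m%:R * b0 + m%:R * m%:R * m%:R * b0.
have hK1 : 0 <= N%:R * m%:R * b0 by rewrite !mulr_ge0 // ler0n.
have hK2 : 0 <= m%:R * m%:R * m%:R * b0 by rewrite !mulr_ge0 // ler0n.
have hK1' : 0 < K + 1 by rewrite /K; lra.
set d := eps / (K + 1).
have hd : 0 < d by rewrite divr_gt0.
have hdK1 : d * (K + 1) = eps by rewrite /d mulfVK // lt0r_neq0.
have hdK : d * K <= eps by rewrite mulrDr mulr1 in hdK1; lra.
set sg := fun r : R => if 0 <= r then 1 else -1 : R.
set c := fun k => estar k x.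
set a := fun k => c k + (if k \in A then d * (m - index k A)%:R * sg (c k) else 0).
set y := \sum_(k < N) a k *: e k.
have hcy : forall k, estar k y = if (k < N)%N then a k else 0.
  by move=> k; exact: (coef_fin Hb Hcf a N k).
have hidx : forall j, (j < m)%N -> index (pi j) A = j.
  move=> j hj; rewrite /A index_map //.
  have := index_uniq 0 (i:=j) (s:=iota 0 m) _ (iota_uniq 0 m).
  by rewrite size_iota nth_iota // add0n; apply.
have hA : forall j, (j < m)%N -> pi j \in A.
  by move=> j hj; rewrite map_f // mem_iota.
have hapi : forall j, (j < m)%N -> `|a (pi j)| = `|c (pi j)| + d * (m - j)%:R.
  move=> j hj; rewrite /a hA // hidx //.
  have hw : 0 <= d * (m - j)%:R by rewrite mulr_ge0 // ltW.
  rewrite /sg; case: ifP => hc.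
    by rewrite mulr1 !ger0_norm // addr_ge0.
  move/negbT: hc; rewrite -ltNge => hc.
  rewrite mulrN1 (ltr0_norm hc) ltr0_norm; lra.
have hadiff : forall k, `|a k - c k| <= d * m%:R.
  move=> k; rewrite /a addrAC subrr add0r.
  case: ifP => _; last by rewrite normr0 mulr_ge0 // ?ltW ?ler0n.
  rewrite normrM normrM (ger0_norm (ltW hd)) normr_nat.
  have -> : `|sg (c k)| = 1 by rewrite /sg; case: ifP => _; rewrite ?normrN normr1.
  by rewrite mulr1; apply: ler_wpM2l; [exact: ltW | rewrite ler_nat leq_subr].
have hout' : forall t, t \notin A -> a t = c t.
  by move=> t ht; rewrite /a (negbTE ht) addr0.
have hstrict : forall i j, (i < j)%N -> (j < m)%N -> `|a (pi j)| < `|a (pi i)|.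
  move=> i j hij hj; rewrite !hapi //; last exact: ltn_trans hij hj.
  have h1 := hdec i j (ltnW hij) hj.
  have h2 : ((m - j)%:R : R) < (m - i)%:R by rewrite ltr_nat; lia.
  have h3 : d * (m - j)%:R < d * (m - i)%:R by rewrite ltr_pM2l.
  lra.
have hnz : forall j, (j < m)%N -> a (pi j) != 0.
  move=> j hj; rewrite -normr_gt0 hapi //.
  have : 0 < d * (m - j)%:R by rewrite mulr_gt0 // ltr0n subn_gt0.
  have := normr_ge0 (c (pi j)); lra.
have hEy : closed_span e y by exact: span_E.
have hyag : forall j, (j < m)%N -> nat_greedy estar y j = pi j.
  apply: (agree (nat_greedy_spec hEy).1 pinj).
  - by move=> j hj; rewrite hcy hpiN // hnz.
  - move=> i j hij hj; rewrite !hcy !hpiN //; first exact: hstrict.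
    exact: ltn_trans hij hj.
  - move=> t ht j hj; rewrite !hcy (hpiN j hj).
    case: ifP => _; last by rewrite normr0 normr_gt0 hnz.
    rewrite hout' // hapi //.
    have h1 := hout t ht j hj.
    have : 0 < d * (m - j)%:R by rewrite mulr_gt0 // ltr0n subn_gt0.
    rewrite /c; lra.
have hG : `|Gvee e estar join pi m x - NGvee e estar join m y| <= eps.
  rewrite /NGvee (@Gvee_ext (nat_greedy estar y) pi m y hyag) !Gvee_F.
  apply: le_trans (F_diff HL (K := m%:R * (d * m%:R * b0)) _) _.
    move=> n; rewrite mem_iota /= => hn.
    rewrite /Gsum -sumrB.
    apply: le_trans (ler_norm_sum _ _ _) _.
    apply: (@le_trans _ _ (\sum_(i < n.+1) d * m%:R * b0)).
      apply: ler_sum => i _; rewrite -scalerBl normrZ.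
      have hi : (i < m)%N by exact: leq_trans (ltn_ord i) hn.
      rewrite hcy hpiN //.
      apply: ler_pM; [exact: normr_ge0 | exact: normr_ge0 | |].
        by rewrite distrC; exact: hadiff.
      by have /andP [] := hab (pi i).
    rewrite sumr_const card_ord -(mulr_natl (d * m%:R * b0) n.+1).
    have hpos : 0 <= d * m%:R * b0.
      by apply: mulr_ge0 => //; apply: mulr_ge0; [exact: ltW | exact: ler0n].
    by apply: ler_wpM2r => //; rewrite ler_nat.
  rewrite size_iota.
  have -> : m%:R * (m%:R * (d * m%:R * b0)) = d * (m%:R * m%:R * m%:R * b0) by ring.
  apply: le_trans hdK; apply: ler_wpM2l; [exact: ltW | rewrite /K; lra].
have hy : `|y| <= `|x| + eps + eps.
  set S := \sum_(k < N) estar k x *: e k.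
  have h1 : `|y - S| <= d * K.
    rewrite /y /S -sumrB; apply: le_trans (ler_norm_sum _ _ _) _.
    apply: (@le_trans _ _ (\sum_(k < N) d * m%:R * b0)).
      apply: ler_sum => k _; rewrite -scalerBl normrZ.
      apply: ler_pM; [exact: normr_ge0 | exact: normr_ge0 | exact: hadiff |].
      by have /andP [] := hab k.
    rewrite sumr_const card_ord -(mulr_natl (d * m%:R * b0) N).
    have -> : N%:R * (d * m%:R * b0) = d * (N%:R * m%:R * b0) by ring.
    apply: ler_wpM2l; [exact: ltW | rewrite /K; lra].
  have h2 : `|x - S| < eps by exact: (HN0 N hN0).
  have e1 : y = (y - S) + (S - x) + x by rewrite addrA subrK subrK.
  rewrite e1; apply: le_trans (ler_normD _ _) _.
  have h3 := ler_normD (y - S) (S - x).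
  rewrite distrC in h2; lra.
exists y, [seq k <- iota 0 N | a k != 0]; split => //.
- split; first by rewrite filter_uniq ?iota_uniq.
  + move=> n; rewrite hcy mem_filter mem_iota /=.
    by case: ifP => hn; rewrite ?andbT ?andbF ?eqxx.
  + move=> k /mapP [j hj ->]; move: hj; rewrite mem_iota /= => hj.
    by rewrite mem_filter hnz // mem_iota /= hpiN.
  + move=> k; rewrite mem_filter => /andP [hk _].
    case: (boolP (k \in A)) => hkA; first by left.
    by right; rewrite -/(c k) -(hout' k hkA).
- split => // i j hi hj hij; rewrite !hcy !hpiN //.
  case: (ltngtP i j) => h; last by [].
    by rewrite gt_eqF // hstrict.
  by rewrite lt_eqF // hstrict.
Qed.

End Main.

Unset Implicit Arguments.
Set Strict Implicit.

Theorem lemma3p1 (R : realType) (X : completeNormedModType R)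
  (le : X -> X -> Prop) (join : X -> X -> X)
  (e : nat -> X) (estar : nat -> X -> R) :
  normed_lattice le join ->
  semi_normalized e -> basic_seq e -> coefficient_functionals e estar ->
  forall C : R, 0 < C ->
  let E := closed_span e in
  let P1 := forall x, E x -> forall m : nat, (0 < m)%N ->
      forall pi, greedy_ordering estar x pi ->
      `|Gvee e estar join pi m x| <= C * `|x| in
  let P2 := forall x, E x -> forall m : nat, (0 < m)%N ->
      `|NGvee e estar join m x| <= C * `|x| in
  let P3 := forall x, E x -> forall m : nat, (0 < m)%N ->
      exists pi, greedy_ordering estar x pi /\
      `|Gvee e estar join pi m x| <= C * `|x| in
  let P4 := forall x, E x -> forall s : seq nat, uniq s ->
      (forall n, estar n x != 0 <-> n \in s) ->
      lattice_strictly_greedy estar (nat_greedy estar x) (size s) x ->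
      `|NGvee e estar join (size s) x| <= C * `|x| in
  let P5 := forall x, E x -> forall s : seq nat, uniq s ->
      (forall n, estar n x != 0 <-> n \in s) ->
      `|NGvee e estar join (size s) x| <= C * `|x| in
  let normNGvee (m : nat) : \bar R :=
      ereal_sup [set (`|NGvee e estar join m x|)%:E | x in [set x | E x /\ `|x| = 1]] in
  let supnorm : \bar R := ereal_sup [set normNGvee m | m in [set m : nat | (0 < m)%N]] in
  [<-> P1; P2; P3; P4; P5] /\ (P2 <-> (supnorm <= C%:E)%E).
Proof.
move=> HL Hsn Hb Hcf C hC E P1 P2 P3 P4 P5 normNG supnorm.
have NG : forall x, E x -> natural_greedy_ordering estar x (nat_greedy estar x).
  move=> z Ez; exact: (nat_greedy_spec Hsn Hcf Ez).
have h12 : P1 -> P2.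
  by move=> h1 x Ex m hm; exact: h1 x Ex m hm _ (NG x Ex).1.
have h23 : P2 -> P3.
  move=> h2 x Ex m hm; exists (nat_greedy estar x); split; first exact: (NG x Ex).1.
  exact: h2.
have h34 : P3 -> P4.
  move=> h3 x Ex s us hs hstr.
  have [hgreedy rnat] := NG x Ex.
  have [rinj rcov rdec] := hgreedy.
  case: (posnP (size s)) => hM.
    by rewrite /NGvee /Gvee hM /= normr0 mulr_ge0 // ltW.
  have [pi [hpi hb]] := h3 x Ex _ hM.
  have hsupp := supp_first hgreedy us hs.
  have hfirst := first_eq_s hgreedy us hs.
  have hag : forall j, (j < size s)%N -> pi j = nat_greedy estar x j.
    apply: (agree hpi rinj).
    - exact: hsupp.
    - move=> i j hij hj; rewrite lt_neqAle rdec ?(ltnW hij) // andbT.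
      apply: hstr => //; first exact: ltn_trans hij hj.
        by move=> e'; move: hij; rewrite e' ltnn.
      exact: hsupp.
    - move=> t ht j hj.
      have ht0 : estar t x = 0.
        apply/eqP; apply: contraT => /hs; rewrite -hfirst => h.
        by move: ht; rewrite h.
      by rewrite ht0 normr0 normr_gt0 hsupp.
  by rewrite /NGvee -(Gvee_ext join e estar x hag).
have h45 : P4 -> P5.
  move=> h4 x Ex s us hs.
  have [hgreedy rnat] := NG x Ex.
  have [rinj rcov rdec] := hgreedy.
  have hfirst := first_eq_s hgreedy us hs.
  apply: (approx hC) => eps he.
  have hdec : forall j k, (j <= k)%N -> (k < size s)%N ->
      `|estar (nat_greedy estar x k) x| <= `|estar (nat_greedy estar x j) x|.
    by move=> j k hjk _; exact: rdec.
  have hout : forall t, t \notin map (nat_greedy estar x) (iota 0 (size s)) ->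
      forall j, (j < size s)%N ->
      `|estar t x| <= `|estar (nat_greedy estar x j) x|.
    move=> t ht j hj.
    have -> : estar t x = 0.
      apply/eqP; apply: contraT => /hs; rewrite -hfirst => h.
      by move: ht; rewrite h.
    by rewrite normr0 normr_ge0.
  have [y [sy [Ey hy hG [usy hsy hAs hsA] [hag hstr]]]] :=
    perturb HL Hsn Hb Hcf Ex rinj hdec hout he.
  have hsz : size sy = size s.
    have hperm : perm_eq sy (map (nat_greedy estar x) (iota 0 (size s))).
      apply: uniq_perm => //; first by rewrite map_inj_uniq ?iota_uniq.
      move=> k; apply/idP/idP; last exact: hAs.
      by move=> /hsA [//|/hs]; rewrite -hfirst.
    by rewrite (perm_size hperm) size_map size_iota.
  exists `|y|, `|NGvee e estar join (size s) y|; split => //.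
    have := ler_normD (Gvee e estar join (nat_greedy estar x) (size s) x -
       NGvee e estar join (size s) y) (NGvee e estar join (size s) y).
    rewrite subrK => h; rewrite /NGvee in h hG *; lra.
  rewrite -hsz; apply: h4 => //.
  move=> i j; rewrite hsz => hi hj hij _; rewrite !hag //; exact: hstr.
have h51 : P5 -> P1.
  move=> h5 x Ex m hm pi hpi.
  have [pinj pcov pdec] := hpi.
  apply: (approx hC) => eps he.
  have hdec : forall j k, (j <= k)%N -> (k < m)%N ->
      `|estar (pi k) x| <= `|estar (pi j) x|.
    by move=> j k hjk _; exact: pdec.
  have hout : forall t, t \notin map pi (iota 0 m) -> forall j, (j < m)%N ->
      `|estar t x| <= `|estar (pi j) x|.
    move=> t ht j hj; case: (eqVneq (estar t x) 0) => [->|ht0].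
      by rewrite normr0 normr_ge0.
    have [k hk] := pcov _ ht0.
    have hkm : (m <= k)%N.
      rewrite leqNgt; apply/negP => hkm.
      by move: ht; rewrite -hk map_f // mem_iota /= hkm.
    rewrite -hk; apply: pdec; exact: ltnW (leq_trans hj hkm).
  have [y [sy [Ey hy hG [usy hsy hAs hsA] [hag hstr]]]] :=
    perturb HL Hsn Hb Hcf Ex pinj hdec hout he.
  exists `|y|, `|NGvee e estar join (size sy) y|; split => //; last first.
    exact: h5 y Ey sy usy hsy.
  have hm' : (m <= size sy)%N.
    have hu : uniq (map pi (iota 0 m)) by rewrite map_inj_uniq ?iota_uniq.
    by have := uniq_leq_size hu hAs; rewrite size_map size_iota.
  have := F_mono HL (fun n => Gsum e estar (nat_greedy estar y) n.+1 y) hm'.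
  rewrite -!Gvee_F => hmono.
  have := ler_normD (Gvee e estar join pi m x - NGvee e estar join m y)
    (NGvee e estar join m y).
  rewrite subrK => h; rewrite /NGvee in h hG hmono *; lra.
split.
  by tfae; [exact: h12 | exact: h23 | exact: h34 | exact: h45 | exact: h51].
rewrite /supnorm /normNG; split.
  move=> h2; apply: ge_ereal_sup => _ [m hm <-]; apply: ge_ereal_sup => _ [x [Ex nx] <-].
  by rewrite lee_fin; have := h2 x Ex m hm; rewrite nx mulr1.
move=> hs x Ex m hm.
case: (eqVneq x 0) => [x0|hx0].
  subst x.
  have hc0 : forall k, estar k 0 = 0.
    by move=> k; have := coef_scale Hb Hcf 0 k Ex; rewrite scale0r mul0r.
  have hF : F join (fun n => Gsum e estar (nat_greedy estar 0) n.+1 0) (iota 0 m) =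
      F join (fun _ => 0) (iota 0 m).
    apply: F_ext => n _; rewrite /Gsum big1 // => i _; by rewrite hc0 scale0r.
  have -> : NGvee e estar join m 0 = 0 by rewrite /NGvee Gvee_F hF (F_zero HL).
  by rewrite !normr0 mulr0.
set r := `|x|^-1.
have hr : 0 < r by rewrite invr_gt0 normr_gt0.
set u := r *: x.
have Eu : E u := E_scale Hcf Ex.
have nu : `|u| = 1 by rewrite normrZ ger0_norm ?ltW // mulVf // normr_eq0.
have hcu : forall k, estar k u = r * estar k x := fun k => coef_scale Hb Hcf r k Ex.
have habs : forall k, `|estar k u| = r * `|estar k x|.
  by move=> k; rewrite hcu normrM ger0_norm // ltW.
have hnz : forall k, (estar k u != 0) = (estar k x != 0).
  by move=> k; rewrite hcu mulf_eq0 (negbTE (lt0r_neq0 hr)).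
have hng : nat_greedy estar u = nat_greedy estar x.
  rewrite /nat_greedy; congr (epsilon _); apply: funext => rho; apply: propext.
  rewrite /natural_greedy_ordering /greedy_ordering.
  split => [[[h1 h2 h3] h4]|[[h1 h2 h3] h4]]; (split; [split|]) => //.
  - by move=> n; rewrite -hnz; exact: h2.
  - by move=> j k hjk; have := h3 j k hjk; rewrite !habs ler_pM2l.
  - by move=> j k hjk e'; apply: h4 => //; rewrite !habs e'.
  - by move=> n; rewrite hnz; exact: h2.
  - by move=> j k hjk; rewrite !habs ler_pM2l //; exact: h3.
  - by move=> j k hjk; rewrite !habs => e'; apply: h4 => //; exact: (mulfI (lt0r_neq0 hr) e').
have hGu : NGvee e estar join m u = r *: NGvee e estar join m x.
  rewrite /NGvee hng !Gvee_F.
  rewrite -(F_scale HL (fun n => Gsum e estar (nat_greedy estar x) n.+1 x) (iota 0 m) hr).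
  apply: F_ext => n _; rewrite /Gsum scaler_sumr; apply: eq_bigr => i _.
  by rewrite hcu scalerA.
have h1 : ((`|NGvee e estar join m u|)%:E <= normNG m)%E.
  by apply: ereal_sup_ge; exists (`|NGvee e estar join m u|)%:E => //; exists u.
have h2' : (normNG m <= C%:E)%E.
  by apply: le_trans hs; apply: ereal_sup_ge; exists (normNG m) => //; exists m.
have := le_trans h1 h2'.
rewrite lee_fin hGu normrZ (ger0_norm (ltW hr)) mulrC /r ler_pdivrMr //.
by rewrite normr_gt0.
Qed.
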